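(* In the FIND setting of the context, fix a leaf cluster $\mathcal C_r$ of $\mathcal T$ and a consistent ordering of $\mathcal T_r^+$. If $\mathcal C_i$ is a leaf node of $\mathcal T_r^+$, then $\boldsymbol\Sigma_i(\mathcal C_i,\mathcal C_i)=\boldsymbol\Sigma(\mathcal C_i,\mathcal C_i)$.
   Context: Setting (FIND). $\mathcal M$ is a finite set of mesh nodes; $\mathbf A$ is an invertible complex matrix indexed by $\mathcal M\times\mathcal M$, structurally symmetric ($A_{ij}\neq0\iff A_{ji}\neq0$); distinct nodes $i,j$ are connected if $A_{ij}\neq 0$. $\boldsymbol\Sigma$ is a complex matrix indexed by $\mathcal M\times\mathcal M$ with $\Sigma_{ij}=0$ whenever $i\neq j$ and $i,j$ are not connected. $\dagger$ is conjugate transpose, $\mathbf X^{-\dagger}=(\mathbf X^{-1})^\dagger$. $\mathbf X(X,Y)$ is the submatrix with rows in $X$, columns in $Y$. For a cluster $\mathcal C\subseteq\mathcal M$: boundary set $\mathcal B_{\mathcal C}=\{i\in\mathcal C: A_{ij}\neq 0\text{ for some } j\notin\mathcal C\}$, inner set $\mathcal I_{\mathcal C}=\mathcal C\setminus\mathcal B_{\mathcal C}$; for $\mathcal C_g$ write $\mathcal B_g,\mathcal I_g$. Cluster tree: $\mathcal T$ is a rooted binary tree of clusters with root $\mathcal M$, each non-leaf cluster the disjoint union of its two children. For a leaf $\mathcal C_r$ with path $r=a_0,\dots,a_d$ (root) and $b_k$ the sibling of $a_k$, the augmented tree $\mathcal T_r^+$ has root $\mathcal C_{-r}=\mathcal M\setminus\mathcal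 C_r$; for $0\le k\le d-2$, $\mathcal C_{-a_k}=\mathcal M\setminus\mathcal C_{a_k}$ has children $\mathcal C_{b_k}$ and $\mathcal C_{-a_{k+1}}$, with $\mathcal C_{-a_{d-1}}$ identified with $\mathcal C_{b_{d-1}}$; each basic cluster $\mathcal C_{b_k}$ carries its subtree from $\mathcal T$. Private inner nodes: $\mathcal S_g=\mathcal I_g$ for a leaf $g$ of $\mathcal T_r^+$; $\mathcal S_g=\mathcal I_g\setminus(\mathcal I_i\cup\mathcal I_j)$ if $g$ has children $i,j$. Consistent ordering: a total order $g_1,\dots,g_m$ of the nodes of $\mathcal T_r^+$ with every node after all its descendants. Elimination: $\mathbf A_{g_1}=\mathbf A$, $\boldsymbol\Sigma_{g_1}=\boldsymbol\Sigma$; for each $g$ (with $\mathbf A_g(\mathcal S_g,\mathcal S_g)$ invertible), $\mathcal L_g=\mathbf A_g(\mathcal B_g,\mathcal S_g)\mathbf A_g(\mathcal S_g,\mathcal S_g)^{-1}$, $\mathbf L_g$ is the identity on $\mathcal M$ except $\mathbf L_g(\mathcal B_g,\mathcal S_g)=\mathcal L_g$, $\mathbf A_{g+}=\mathbf L_g^{-1}\mathbf A_g$, $\boldsymbol\Sigma_{g+}=\mathbf L_g^{-1}\boldsymbol\Sigma_g\mathbf L_g^{-\dagger}$, and $\mathbf A_{g_{t+1}}=\mathbf A_{g_t+}$, $\boldsymbol\Sigma_{g_{t+1}}=\boldsymbol\Sigma_{g_t+}$. Thus $\boldsymbol\Sigma_i$ is the matrix just before eliminating $\mathcal S_i$. 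*)

(* Defs.v *)
(* Mesh nodes are 'I_n; scalars live in an arbitrary
   numeric closed field C (e.g. the complex numbers), which has a conjugation. *)
From mathcomp Require Import all_boot all_order all_algebra.
Set Implicit Arguments. Unset Strict Implicit. Unset Printing Implicit Defensive.
Import Order.TTheory GRing.Theory Num.Theory.
Local Open Scope ring_scope.

Section FIND.
Variables (C : numClosedFieldType) (n : nat).
Notation node := 'I_n.
Notation mx := 'M[C]_n.

Definition subm (R S : {set node}) (X : mx) : 'M[C]_(#|R|, #|S|) :=
  \matrix_(i, j) X (enum_val i) (enum_val j).

Definition embed (R S : {set node}) (Y : 'M[C]_(#|R|, #|S|)) : mx :=
  \sum_(i < #|R|) \sum_(j < #|S|) Y i j *: delta_mx (enum_val i) (enum_val j).

Definition ctrmx (X : mx) : mx := (map_mx (@Num.conj C) X)^T.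

Definition bset (A : mx) (K : {set node}) : {set node} :=
  [set i in K | [exists j, (j \notin K) && (A i j != 0)]].
Definition iset (A : mx) (K : {set node}) : {set node} := K :\: bset A K.

End FIND.

Inductive ctree (n : nat) :=
  | CLeaf of {set 'I_n}
  | CNode of {set 'I_n} & ctree n & ctree n.
Arguments CLeaf {n}.
Arguments CNode {n}.

Definition cl n (t : ctree n) : {set 'I_n} :=
  match t with CLeaf K => K | CNode K _ _ => K end.

Fixpoint wf_ctree n (t : ctree n) : bool :=
  match t with
  | CLeaf _ => true
  | CNode K l r => [&& K == cl l :|: cl r, [disjoint cl l & cl r],
                       wf_ctree l & wf_ctree r]
  end.

Definition cluster_tree n (t : ctree n) : bool := wf_ctree t && (cl t == setT).

(* Nodes are addressed by positions: paths from the root (false = left child,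
   true = right child). *)
Fixpoint subtree_at n (t : ctree n) (p : seq bool) : option (ctree n) :=
  match p, t with
  | [::], _ => Some t
  | b :: p', CNode _ l r => subtree_at (if b then r else l) p'
  | _ :: _, CLeaf _ => None
  end.

(* Augmented tree T_r^+ for the leaf C_r at position p of t.  Walking down the
   path a_d (root), ..., a_0 = r, at a_{k+1} with on-path child a_k and
   sibling b_k we build C_{-a_k}: it is the subtree of b_{d-1} when k = d-1,
   and otherwise the node (M \ C_{a_k}) with children (subtree of b_k) and
   C_{-a_{k+1}}.  The result is C_{-a_0} = C_{-r} with its subtree.
   Returns None if p does not lead to a leaf or if r is the root (d = 0). *)
Fixpoint augment_rec n (t : ctree n) (p : seq bool) (acc : option (ctree n))
  : option (ctree n) :=
  match p, t with
  | [::], CLeaf _ => acc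
  | b :: p', CNode _ l r =>
      let on := if b then r else l in
      let off := if b then l else r in
      augment_rec on p'
        (Some (match acc with
               | None => off
               | Some a => CNode (setT :\: cl on) off a
               end))
  | _, _ => None
  end.
Definition augment n (t : ctree n) (p : seq bool) := augment_rec t p None.

Definition consistent_ordering n (t : ctree n) (ord : seq (seq bool)) : Prop :=
  [/\ uniq ord,
      (forall p, p \in ord <-> subtree_at t p <> None) &
      (forall p q, p \in ord -> q \in ord -> prefix p q -> p != q ->
         (index q ord < index p ord)%N)].

Section Elim.
Variables (C : numClosedFieldType) (n : nat) (A : 'M[C]_n).
(* A is the original matrix; boundary sets are taken w.r.t. A. *)

Definition pset (g : ctree n) : {set 'I_n} :=
  match g with
  | CLeaf K => iset A K
  | CNode K l r => iset A K :\: (iset A (cl l) :|: iset A (cl r))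
  end.

Definition Lmat (g : ctree n) (Ag : 'M[C]_n) : 'M[C]_n :=
  let B := bset A (cl g) in
  let S := pset g in
  1%:M + embed (subm B S Ag *m invmx (subm S S Ag)).

Definition elim_step (g : ctree n) (st : 'M[C]_n * 'M[C]_n) :=
  let Li := invmx (Lmat g st.1) in
  (Li *m st.1, Li *m st.2 *m ctrmx Li).

(* (A_{g_{k+1}}, Sigma_{g_{k+1}}) : the state after eliminating g_1..g_k *)
Definition elim_state (t : ctree n) (ord : seq (seq bool)) (Sig : 'M[C]_n)
  (k : nat) : 'M[C]_n * 'M[C]_n :=
  foldl (fun st p => match subtree_at t p with
                     | Some g => elim_step g st
                     | None => st end) (A, Sig) (take k ord).

Definition elim_defined (t : ctree n) (ord : seq (seq bool)) (Sig : 'M[C]_n) :=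
  forall k, (k < size ord)%N ->
    match subtree_at t (nth [::] ord k) with
    | Some g => is_true (subm (pset g) (pset g) (elim_state t ord Sig k).1 \in unitmx)
    | None => True
    end.

End Elim.

(* Main.v *)
Require Import Defs.
From mathcomp Require Import all_boot all_order all_algebra.
Set Implicit Arguments. Unset Strict Implicit.
Import Order.TTheory GRing.Theory Num.Theory.
Local Open Scope ring_scope.

Section Mat.
Variables (C : numClosedFieldType) (n : nat).

Lemma embed_out (R S : {set 'I_n}) (Y : 'M[C]_(#|R|, #|S|)) x y :
  (x \notin R) || (y \notin S) -> embed Y x y = 0.
Proof.
move=> H; rewrite /embed summxE big1 // => i _; rewrite summxE big1 // => j _.
rewrite !mxE; case: eqP => [ex|]; last by rewrite mulr0.
case: eqP => [ey|]; last by rewrite mulr0.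
by move: H; rewrite ex ey !enum_valP.
Qed.

Lemma mul_rowid (P M : 'M[C]_n) x y :
  (forall j, P x j = (1%:M : 'M[C]_n) x j) -> (P *m M) x y = M x y.
Proof.
move=> H; transitivity (((1%:M : 'M[C]_n) *m M) x y); last by rewrite mul1mx.
by rewrite !mxE; apply: eq_bigr => j _; rewrite H.
Qed.

Lemma mul_colid (P M : 'M[C]_n) x y :
  (forall j, P j y = (1%:M : 'M[C]_n) j y) -> (M *m P) x y = M x y.
Proof.
move=> H; transitivity ((M *m (1%:M : 'M[C]_n)) x y); last by rewrite mulmx1.
by rewrite !mxE; apply: eq_bigr => j _; rewrite H.
Qed.

Lemma step_fix (B S : {set 'I_n}) (Y : 'M[C]_(#|B|, #|S|)) (Sg : 'M[C]_n) x y :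
  [disjoint B & S] -> x \notin B -> y \notin B ->
  let Li := invmx (1%:M + embed Y) in (Li *m Sg *m ctrmx Li) x y = Sg x y.
Proof.
move=> dBS xB yB Li.
set E := embed Y.
have EE : E *m E = 0.
  apply/matrixP => a b; rewrite !mxE big1 // => j _.
  case jB: (j \in B).
    by rewrite (@embed_out _ _ _ a j) ?mul0r // (disjointFr dBS jB) orbT.
  by rewrite (@embed_out _ _ _ j b) ?mulr0 // jB.
have HL : Li = 1%:M - E.
  have H1 : (1%:M + E) *m (1%:M - E) = 1%:M.
    rewrite mulmxDl mulmxBr mulmxBr !mul1mx mulmx1 EE subr0.
    by rewrite subrK.
  have [U _] := mulmx1_unit H1.
  by rewrite /Li -[RHS](mulKmx U) H1 mulmx1.
have Erow : forall z j, z \notin B -> Li z j = (1%:M : 'M[C]_n) z j.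
  by move=> z j zB; rewrite HL !mxE (@embed_out _ _ _ z j) ?zB // subr0.
rewrite mul_colid; first by rewrite mul_rowid // => j; apply: Erow.
move=> j; rewrite /ctrmx !mxE Erow // !mxE conjC_nat eq_sym //.
Qed.
End Mat.

Lemma augment_wf n (t : ctree n) p acc res :
  wf_ctree t -> (acc = None -> cl t = setT) ->
  (forall a, acc = Some a -> wf_ctree a /\ cl a = ~: cl t) ->
  augment_rec t p acc = Some res -> wf_ctree res.
Proof.
elim: p t acc => [|b p IH] [K|K l r] acc //= wt Hn Hs.
- by case: acc Hn Hs => // a _ /(_ a erefl) [? _] [<-].
- case/and4P: wt => /eqP eK dlr wl wr.
  apply: IH; first by case: b.
    by [].
  move=> a [<-]; case: acc Hn Hs => [a0|] Hn Hs.
    have [wa0 ca0] := Hs a0 erefl.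
    split.
      rewrite /= wa0 andbT; apply/and3P; split.
      + apply/eqP; rewrite ca0 eK; apply/setP => x; rewrite !inE.
        case: b; case xl: (x \in cl l); case xr: (x \in cl r) => //=.
        * by rewrite (disjointFr dlr xl) in xr.
        * by rewrite (disjointFr dlr xl) in xr.
      + rewrite ca0 eK; apply/pred0P => x; rewrite /= !inE.
        by case: b; case: (x \in cl l); case: (x \in cl r).
      + by case: b.
    by rewrite /= setTD.
  have cT := Hn erefl; split; first by case: b.
  apply/setP => x; move: (cT); rewrite eK => /setP/(_ x); rewrite !inE => E.
  case: b; case xl: (x \in cl l); case xr: (x \in cl r) => //=; move: E; rewrite ?xl ?xr //.
  all: by rewrite (disjointFr dlr xl) in xr.
Qed.

Lemma subtree_sub n (t : ctree n) p g :
  wf_ctree t -> subtree_at t p = Some g -> cl g \subset cl t.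
Proof.
elim: p t => [|b p IH] [K|K l r] //=; first by move=> _ [<-].
  by move=> _ [<-].
case/and4P => /eqP eK _ wl wr H.
have wb : wf_ctree (if b then r else l) by case: ifP.
move: (IH _ wb H); clear wb H; case: b => /= S; apply: subset_trans S _;
  rewrite eK ?subsetUl ?subsetUr //.
Qed.

Lemma subtree_disj n (t : ctree n) p q g h :
  wf_ctree t -> subtree_at t p = Some g -> subtree_at t q = Some h ->
  ~~ prefix p q -> ~~ prefix q p -> [disjoint cl g & cl h].
Proof.
elim: p t q => [|b p IH] t q wt Hg Hh; first by rewrite prefix0s.
case: q Hh => [|c q] Hh; first by move=> _; rewrite prefix0s.
case: t wt Hg Hh => [K|K l r] //=.
case/and4P => /eqP eK dlr wl wr Hg Hh.
rewrite [c == b]eq_sym.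
case: (eqVneq b c) => [eb|bc] /= pq qp.
  subst c.
  have wb : wf_ctree (if b then r else l) by case: ifP.
  exact: (IH _ _ wb Hg Hh pq qp).
have wb : wf_ctree (if b then r else l) by case: ifP.
have wc : wf_ctree (if c then r else l) by case: ifP.
have Sg := subtree_sub wb Hg.
have Sh := subtree_sub wc Hh.
clear Hg Hh pq qp wb wc; move: bc Sg Sh; case: b; case: c => //= _ Sg Sh.
  by apply: (disjointW Sg Sh); rewrite disjoint_sym.
by apply: (disjointW Sg Sh).
Qed.

Lemma subtree_leaf n (t : ctree n) p s K :
  subtree_at t p = Some (CLeaf K) -> subtree_at t (p ++ s) <> None -> s = [::].
Proof.
elim: p t => [|b p IH] t.
  by case: t => [K'|K' l r] //= _; case: s.
by case: t => // K' l r; apply: IH.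
Qed.

Lemma pset_sub (C : numClosedFieldType) n (A : 'M[C]_n) g : pset A g \subset iset A (cl g).
Proof. by case: g => [K|K l r] //=; apply: subsetDl. Qed.

Lemma bset_pset_disj (C : numClosedFieldType) n (A : 'M[C]_n) g : [disjoint bset A (cl g) & pset A g].
Proof.
apply: (disjointWr (pset_sub A g)); rewrite /iset disjoint_sym.
by apply/pred0P => x /=; rewrite !inE; case: (x \in cl g); case: [exists j, _].
Qed.

Lemma bset_sub (C : numClosedFieldType) n (A : 'M[C]_n) K : bset A K \subset K.
Proof. by apply/subsetP => x; rewrite inE => /andP[]. Qed.

Theorem corollary3 (C : numClosedFieldType) (n : nat)
  (A Sig : 'M[C]_n)
  (HAinv : A \in unitmx)
  (HAsym : forall i j : 'I_n, (A i j != 0) = (A j i != 0))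
  (HSig : forall i j : 'I_n, i != j -> A i j = 0 -> Sig i j = 0)
  (T : ctree n) (HT : cluster_tree T)
  (pr : seq bool) (Cr : {set 'I_n}) (Hr : subtree_at T pr = Some (CLeaf Cr))
  (Tp : ctree n) (HTp : augment T pr = Some Tp)
  (ord : seq (seq bool)) (Hord : consistent_ordering Tp ord)
  (Hdef : elim_defined A Tp ord Sig)
  (pi : seq bool) (Ci : {set 'I_n}) (Hi : subtree_at Tp pi = Some (CLeaf Ci)) :
  subm Ci Ci (elim_state A Tp ord Sig (index pi ord)).2 = subm Ci Ci Sig.
Proof.
have wTp : wf_ctree Tp.
  case/andP: HT => wT /eqP cT.
  by apply: (augment_wf (t := T) (p := pr) (acc := None)) HTp.
case: Hord => uo Hmem Hpre.
have piord : pi \in ord by apply/Hmem; rewrite Hi.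
set k := index pi ord.
have Hdisj : forall p, p \in take k ord -> forall g, subtree_at Tp p = Some g ->
    [disjoint cl g & Ci].
  move=> p pk g Hg.
  have pord : p \in ord by rewrite -(cat_take_drop k ord) mem_cat pk.
  have ltpk : (index p ord < k)%N.
    rewrite -(cat_take_drop k ord) index_cat pk.
    have h1 : (index p (take k ord) < size (take k ord))%N by rewrite index_mem.
    apply: (leq_trans h1); rewrite size_take; by case: ltnP.
  have npi : p != pi by apply/eqP => e; rewrite e ltnn in ltpk.
  apply: (subtree_disj wTp Hg Hi).
    apply/negP => pp; have := Hpre p pi pord piord pp npi.
    by rewrite -/k ltnNge ltnW.
  apply/negP => /prefixP [s es].
  have s0 : s = [::].
    apply: (subtree_leaf Hi); rewrite -es; exact/Hmem.
  by move: npi; rewrite es s0 cats0 eqxx.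
apply/matrixP => a b; rewrite !mxE.
have xC : enum_val a \in Ci by exact: enum_valP.
have yC : enum_val b \in Ci by exact: enum_valP.
rewrite /elim_state.
transitivity ((A, Sig).2 (enum_val a) (enum_val b)); last by [].
move: Hdisj; elim: (take k ord) (A, Sig) => [|p l IH] st Hd //=.
rewrite IH; last by move=> q ql; apply: Hd; rewrite inE ql orbT.
case Eg: (subtree_at Tp p) => [g|] //.
have dg := Hd p (mem_head _ _) g Eg.
have nB : forall z, z \in Ci -> z \notin bset A (cl g).
  move=> z zC; apply/negP => zB.
  have zg := subsetP (bset_sub A (cl g)) z zB.
  by rewrite (disjointFl dg zC) in zg.
rewrite /elim_step /Lmat /=.
by apply: step_fix; [apply: bset_pset_disj | apply: nB | apply: nB].
Qed.
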